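(* Prioritized planning is suboptimal for the makespan objective in general for the class of P-solvable MAPF instances: there exists a P-solvable MAPF instance such that, for every priority ordering $\prec$, every solution consistent with $\prec$ has makespan strictly greater than the minimum makespan over all solutions of the instance.
   Context: A MAPF instance consists of a connected undirected graph $G=(V,E)$ and $M$ agents $a_1,\dots,a_M$; agent $a_i$ has a start vertex $s_i$ and a target vertex $t_i$, and start vertices are pairwise distinct, as are target vertices. Time is discrete; at each time step every agent either moves to an adjacent vertex or waits. A path for $a_i$ is a sequence $\pi_i=\langle \pi_i(0),\pi_i(1),\dots\rangle$ with $\pi_i(0)=s_i$, consecutive vertices equal or adjacent, and $\pi_i(t)=t_i$ for all $t\ge T_i$, where the arrival time $T_i$ is the least such time. Two agents collide if they occupy the same vertex at the same time, or traverse the same edge in opposite directions at the same time step. A solution is a collision-free set of paths, one per agent; its makespan is $\max_i T_i$. A priority ordering is a strict partial order $\prec$ on $\{1,\dots,M\}$ ($a_i$ has higher priority than $a_j$ iff $i\prec j$). A solution $\{\pi_i\}$ is consistent with $\prec$ if for every $i$ the arrival time of $\pi_i$ equals the minimum arrival time over all paths for $a_i$ that do not collide with any $\pi_k$ with $k\prec i$ (higher priority agents never wait for lower priority agents). A MAPF instance is P-solvable iff it has a solution consistent with some priority ordering. *)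

(* Defs.v *)
From mathcomp Require Import all_boot.
Unset Printing Implicit Defensive.

Record inst := Inst {
  iV : finType;
  iadj : rel iV;
  iM : nat;
  isrc : 'I_iM -> iV;
  itgt : 'I_iM -> iV }.

Definition well_formed (I : inst) : Prop :=
  symmetric (iadj I) /\ irreflexive (iadj I) /\
  (forall x y : iV I, connect (iadj I) x y) /\
  injective (isrc I) /\ injective (itgt I).

Definition settled (V : Type) (p : nat -> V) (v : V) (T : nat) : Prop :=
  forall t, T <= t -> p t = v.

Definition is_path (I : inst) (i : 'I_(iM I)) (p : nat -> iV I) : Prop :=
  p 0 = isrc I i /\
  (forall t, p t.+1 = p t \/ iadj I (p t) (p t.+1)) /\
  (exists T, @settled _ p (itgt I i) T).

Definition arrival (V : Type) (p : nat -> V) (v : V) (T : nat) : Prop :=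
  @settled V p v T /\ forall T', @settled V p v T' -> T <= T'.

Definition collide (V : Type) (p q : nat -> V) : Prop :=
  exists t, p t = q t \/ (p t = q t.+1 /\ p t.+1 = q t).

Definition solution (I : inst) (pi : 'I_(iM I) -> nat -> iV I) : Prop :=
  (forall i, is_path I i (pi i)) /\
  (forall i j, i != j -> ~ @collide _ (pi i) (pi j)).

Definition makespan (I : inst) (pi : 'I_(iM I) -> nat -> iV I) (m : nat) : Prop :=
  exists T : 'I_(iM I) -> nat,
    (forall i, @arrival _ (pi i) (itgt I i) (T i)) /\ m = \max_(i < iM I) T i.

Definition min_makespan (I : inst) (m : nat) : Prop :=
  (exists pi, solution I pi /\ makespan I pi m) /\
  (forall pi m', solution I pi -> makespan I pi m' -> m <= m').

(* strict partial order; k ≺ i means a_k has higher priority than a_i *)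
Definition priority_ordering (M : nat) (prec : rel 'I_M) : Prop :=
  irreflexive prec /\ transitive prec.

Definition consistent (I : inst) (prec : rel 'I_(iM I))
  (pi : 'I_(iM I) -> nat -> iV I) : Prop :=
  solution I pi /\
  forall i T, @arrival _ (pi i) (itgt I i) T ->
    forall p T', is_path I i p ->
      (forall k, prec k i -> ~ @collide _ p (pi k)) ->
      @arrival _ p (itgt I i) T' -> T <= T'.

Definition P_solvable (I : inst) : Prop :=
  exists prec : rel 'I_(iM I), @priority_ordering (iM I) prec /\ exists pi, consistent I prec pi.

(* Main.v *)
Require Import Defs.
From mathcomp Require Import all_boot.

Section Gen.
Variable V : eqType.
Variable adj : rel V.
Variable allV : seq V.
Hypothesis allVP : forall x : V, x \in allV.

Definition mv (x x' : V) := (x' == x) || adj x x'.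

Definition jok (r s : V * V) :=
  [&& mv r.1 s.1, mv r.2 s.2, s.1 != s.2 & ~~ ((s.1 == r.2) && (s.2 == r.1))].

Definition jstep (al : nat -> V * V -> bool) (t : nat) (R : seq (V * V)) :=
  [seq s <- [seq (a, b) | a <- allV, b <- allV] | al t.+1 s && has (fun r => jok r s) R].

Fixpoint jreach al s0 t :=
  match t with 0 => [:: s0] | t'.+1 => jstep al t' (jreach al s0 t') end.

Lemma jreach_in (al : nat -> V * V -> bool) (p q : nat -> V) :
  (forall t, al t (p t, q t)) ->
  (forall t, mv (p t) (p t.+1)) -> (forall t, mv (q t) (q t.+1)) ->
  ~ collide V p q -> forall t, (p t, q t) \in jreach al (p 0, q 0) t.
Proof.
move=> Hal Hp Hq Hc; elim=> [|t IH] /=; first by rewrite mem_seq1.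
rewrite mem_filter Hal /=; apply/andP; split; last first.
  by apply: (allpairs_f pair); apply: allVP.
apply/hasP; exists (p t, q t) => //.
rewrite /jok /= Hp Hq /=; apply/andP; split.
  by apply/eqP => E; apply: Hc; exists t.+1; left.
apply/negP => /andP [/eqP E1 /eqP E2]; apply: Hc; exists t; right; split=> //.
Qed.

Definition sstep (S : seq V) := [seq v <- allV | has (fun u => mv u v) S].
Fixpoint sreach s0 t := match t with 0 => [:: s0] | t'.+1 => sstep (sreach s0 t') end.

Lemma sreach_in (p : nat -> V) :
  (forall t, mv (p t) (p t.+1)) -> forall t, p t \in sreach (p 0) t.
Proof.
move=> Hp; elim=> [|t IH] /=; first by rewrite mem_seq1.
rewrite mem_filter allVP andbT; apply/hasP; exists (p t) => //.
Qed.

Definition cfb (p q : nat -> V) t :=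
  (p t != q t) && ~~ ((p t == q t.+1) && (p t.+1 == q t)).

Lemma nocoll (p q : nat -> V) N :
  all (cfb p q) (iota 0 N.+1) ->
  (forall t, N <= t -> p t = p N /\ q t = q N) -> ~ collide V p q.
Proof.
move=> H0 Hc [t Ht]; have H := allP H0.
have HN : cfb p q N by apply: H; rewrite mem_iota add0n ltnS leqnn.
case: (leqP t N) => tN.
  have : cfb p q t by apply: H; rewrite mem_iota add0n ltnS.
  rewrite /cfb; case: Ht => [->|[-> ->]]; first by rewrite eqxx.
  by rewrite !eqxx andbF.
move: HN; rewrite /cfb => /andP [/eqP HN _].
have [E1 E2] := Hc t (ltnW tN).
have [E3 E4] := Hc t.+1 (leqW (ltnW tN)).
case: Ht => [|[]]; first by rewrite E1 E2.
by rewrite E1 E4.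
Qed.

Definition mkp (s : seq V) (d : V) (t : nat) := nth d s t.

Lemma mkp_end s d t : size s <= t -> mkp s d t = d.
Proof. exact: nth_default. Qed.

Lemma mkp_settled s d : settled V (mkp s d) d (size s).
Proof. by move=> t; apply: mkp_end. Qed.

Lemma mkp_arrival s d : last d s != d -> arrival V (mkp s d) d (size s).
Proof.
move=> Hl; split; first exact: mkp_settled.
move=> T' HT; rewrite leqNgt; apply/negP => lt.
have : mkp s d (size s).-1 = d by apply: HT; rewrite -ltnS (ltn_predK lt).
by rewrite /mkp nth_last => E; rewrite E eqxx in Hl.
Qed.

Lemma mkp_mv s d : all (fun t => mv (mkp s d t) (mkp s d t.+1)) (iota 0 (size s)) ->
  forall t, mv (mkp s d t) (mkp s d t.+1).
Proof.
move=> /allP H t; case: (ltnP t (size s)) => ts.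
  by apply: H; rewrite mem_iota.
have ts1 : size s <= t.+1 by apply: leqW.
by rewrite /mv !mkp_end ?eqxx.
Qed.

Lemma mkp_nocoll s1 d1 s2 d2 :
  all (cfb (mkp s1 d1) (mkp s2 d2)) (iota 0 (maxn (size s1) (size s2)).+1) ->
  ~ collide V (mkp s1 d1) (mkp s2 d2).
Proof.
move=> H; apply: (@nocoll _ _ (maxn (size s1) (size s2)) H) => t Ht.
have h1 : size s1 <= maxn (size s1) (size s2) := leq_maxl _ _.
have h2 : size s2 <= maxn (size s1) (size s2) := leq_maxr _ _.
by split; rewrite !mkp_end ?(leq_trans h1 Ht) ?(leq_trans h2 Ht).
Qed.

Lemma mv_of (p : nat -> V) :
  (forall t, p t.+1 = p t \/ adj (p t) (p t.+1)) -> forall t, mv (p t) (p t.+1).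
Proof. by move=> H t; case: (H t) => [->|A]; rewrite /mv ?eqxx ?A ?orbT. Qed.

Lemma of_mv (p : nat -> V) :
  (forall t, mv (p t) (p t.+1)) -> forall t, p t.+1 = p t \/ adj (p t) (p t.+1).
Proof. by move=> H t; case/orP: (H t) => [/eqP|]; auto. Qed.

End Gen.

Definition VV := 'I_6.
Definition v0 : VV := @Ordinal 6 0 isT.
Definition v1 : VV := @Ordinal 6 1 isT.
Definition v2 : VV := @Ordinal 6 2 isT.
Definition v3 : VV := @Ordinal 6 3 isT.
Definition v4 : VV := @Ordinal 6 4 isT.
Definition v5 : VV := @Ordinal 6 5 isT.
Definition EE : seq (nat * nat) := [:: (0,1); (0,2); (0,3); (1,4); (1,5)].
Definition eadj : rel VV := fun x y => ((val x, val y) \in EE) || ((val y, val x) \in EE).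
Definition src0 (i : 'I_2) : VV := if val i == 0 then v0 else v4.
Definition tgt0 (i : 'I_2) : VV := if val i == 0 then v4 else v2.
Definition I0 : inst := @Inst VV eadj 2 src0 tgt0.
Definition allV6 : seq VV := [:: v0; v1; v2; v3; v4; v5].
Lemma allV6P : forall x : VV, x \in allV6.
Proof. by case=> [[|[|[|[|[|[|n]]]]]] Hn]. Qed.


Definition al1 (t : nat) (s : VV * VV) := ((3 <= t) ==> (s.2 == v2)) && ((4 <= t) ==> (s.1 == v4)).
Definition al2 (t : nat) (s : VV * VV) := ((2 <= t) ==> (s.1 == v4)) && ((4 <= t) ==> (s.2 == v2)).
Lemma c1 : jreach _ eadj allV6 al1 (v0, v4) 4 = [::]. Proof. by vm_compute. Qed.
Lemma c2 : jreach _ eadj allV6 al2 (v0, v4) 4 = [::]. Proof. by vm_compute. Qed.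
Lemma c3 : v2 \in sreach _ eadj allV6 v4 2 = false. Proof. by vm_compute. Qed.

Lemma nosol (p q : nat -> VV) TA TB :
  p 0 = v0 -> q 0 = v4 ->
  (forall t, mv _ eadj (p t) (p t.+1)) -> (forall t, mv _ eadj (q t) (q t.+1)) ->
  ~ collide VV p q -> settled VV p v4 TA -> settled VV q v2 TB ->
  ((TA <= 4) && (TB <= 3)) || ((TA <= 2) && (TB <= 4)) -> False.
Proof.
move=> p0 q0 Hp Hq Hc SA SB /orP [/andP [a b]|/andP [a b]].
- suff H : forall t, al1 t (p t, q t).
    by have := @jreach_in _ eadj allV6 allV6P al1 p q H Hp Hq Hc 4; rewrite p0 q0 c1 in_nil.
  move=> t; rewrite /al1 /=; apply/andP; split; apply/implyP => h; apply/eqP.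
    by apply: SB; apply: leq_trans b h.
  by apply: SA; apply: leq_trans a h.
- suff H : forall t, al2 t (p t, q t).
    by have := @jreach_in _ eadj allV6 allV6P al2 p q H Hp Hq Hc 4; rewrite p0 q0 c2 in_nil.
  move=> t; rewrite /al2 /=; apply/andP; split; apply/implyP => h; apply/eqP.
    by apply: SA; apply: leq_trans a h.
  by apply: SB; apply: leq_trans b h.
Qed.

Definition pA_sh := mkp _ [:: v0; v1] v4.
Definition pB_sh := mkp _ [:: v4; v1; v0] v2.
Definition pA_c := mkp _ [:: v0; v3; v3; v0; v1] v4.
Definition pA_o := mkp _ [:: v0; v1; v5; v1] v4.
Definition pB_o := mkp _ [:: v4; v4; v1; v0] v2.

Definition oA : 'I_2 := @Ordinal 2 0 isT.
Definition oB : 'I_2 := @Ordinal 2 1 isT.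

Lemma ord2 (i : 'I_2) : i = oA \/ i = oB.
Proof.
case: i => [[|[|n]] H] //.
- by left; apply: val_inj.
- by right; apply: val_inj.
Qed.

Lemma arrival_uniq {V : Type} {p : nat -> V} {v T1 T2} :
  arrival V p v T1 -> arrival V p v T2 -> T1 = T2.
Proof.
move=> [S1 M1] [S2 M2]; apply/eqP; rewrite eqn_leq; apply/andP; split.
  exact: M1. exact: M2.
Qed.

Definition pif (pa pb : nat -> VV) : 'I_(iM I0) -> nat -> iV I0 :=
  fun i => if val i == 0 then pa else pb.

Lemma path_A (p : nat -> VV) : p 0 = v0 -> (forall t, mv _ eadj (p t) (p t.+1)) ->
  (exists T, settled VV p v4 T) -> is_path I0 oA p.
Proof. by move=> h0 hm hs; split=> //; split=> //; apply: of_mv. Qed.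

Lemma path_B (p : nat -> VV) : p 0 = v4 -> (forall t, mv _ eadj (p t) (p t.+1)) ->
  (exists T, settled VV p v2 T) -> is_path I0 oB p.
Proof. by move=> h0 hm hs; split=> //; split=> //; apply: of_mv. Qed.

Lemma sol_of (pa pb : nat -> VV) :
  is_path I0 oA pa -> is_path I0 oB pb ->
  ~ collide VV pa pb -> ~ collide VV pb pa -> solution I0 (pif pa pb).
Proof.
move=> ha hb c1 c2; split.
  by move=> i; case: (ord2 i) => ->.
move=> i j; case: (ord2 i) => ->; case: (ord2 j) => -> //; by rewrite eqxx.
Qed.

Lemma hc (x : VV) : connect eadj x v0.
Proof.
case: x => [[|[|[|[|[|[|n]]]]]] Hn] //.
- by have -> : Ordinal Hn = v0 by apply: val_inj.
- by apply: connect1.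
- by apply: connect1.
- by apply: connect1.
- by apply: (@connect_trans _ _ v1); apply: connect1.
- by apply: (@connect_trans _ _ v1); apply: connect1.
Qed.

Lemma eadj_sym : symmetric eadj.
Proof. by move=> x y; rewrite /eadj orbC. Qed.

Theorem corollary1 :
  exists I : inst,
    well_formed I /\ P_solvable I /\
    forall prec : rel 'I_(iM I), @priority_ordering (iM I) prec ->
      forall pi, consistent I prec pi ->
        forall m ms, min_makespan I m -> makespan I pi ms -> m < ms.
Proof.
have pBsh_path : is_path I0 oB pB_sh.
  apply: path_B => //; [exact: mkp_mv | by exists 3; apply: mkp_settled].
have pAsh_path : is_path I0 oA pA_sh.
  apply: path_A => //; [exact: mkp_mv | by exists 2; apply: mkp_settled].
exists I0; split; [|split].
- split; first exact: eadj_sym.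
  split; first by case=> [[|[|[|[|[|[|n]]]]]] Hn].
  split.
    move=> x y; apply: connect_trans (hc x) _.
    by rewrite (sym_connect_sym eadj_sym); apply: hc.
  split; move=> i j; case: (ord2 i) => ->; case: (ord2 j) => -> //=;
    by move/(congr1 val).
- exists (fun i j : 'I_2 => (val i == 1) && (val j == 0)); split.
    split.
      by move=> i /=; case: eqP => // ->.
    by move=> y x z /andP [_ /eqP h] /andP [/eqP h' _]; rewrite h in h'.
  exists (pif pA_c pB_sh).
  have pAc_path : is_path I0 oA pA_c.
    apply: path_A => //; [exact: mkp_mv | by exists 5; apply: mkp_settled].
  split.
    apply: sol_of => //; apply: mkp_nocoll; by vm_compute.
  move=> i T HT p T' Pp Hav HT'.
  case: (ord2 i) => Ei; subst i.
  + have -> : T = 5 by apply: (arrival_uniq HT); apply: mkp_arrival.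
    rewrite leqNgt; apply/negP => lt.
    have [p0 [pm _]] := Pp.
    apply: (@nosol p pB_sh T' 3) => //.
    * exact: mv_of.
    * exact: mkp_mv.
    * by apply: (Hav oB).
    * exact: HT'.1.
    * exact: mkp_settled.
    * by rewrite -ltnS lt.
  + have -> : T = 3 by apply: (arrival_uniq HT); apply: mkp_arrival.
    rewrite leqNgt; apply/negP => lt.
    have [p0 [pm _]] := Pp.
    have := @sreach_in _ eadj allV6 allV6P p (@mv_of _ eadj p pm) 2.
    have -> : p 2 = v2 by apply: HT'.1; rewrite -ltnS.
    by rewrite p0 /= c3.
- move=> prec [irr tr] pi [sol cons] m ms [[pi0 [sol0 mk0]] minm] [T [arrT ->]].
  have hm : m <= 4.
    apply: (minm (pif pA_o pB_o)).
      apply: sol_of.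
      * apply: path_A => //; [exact: mkp_mv | by exists 4; apply: mkp_settled].
      * apply: path_B => //; [exact: mkp_mv | by exists 4; apply: mkp_settled].
      * by apply: mkp_nocoll; vm_compute.
      * by apply: mkp_nocoll; vm_compute.
    exists (fun _ => 4); split.
      by move=> i; case: (ord2 i) => -> /=; apply: mkp_arrival.
    by rewrite /= !big_ord_recl big_ord0.
  apply: leq_ltn_trans hm _; rewrite ltnNge; apply/negP => hle.
  have TA := leq_trans (leq_bigmax (F := T) oA) hle.
  have TB := leq_trans (leq_bigmax (F := T) oB) hle.
  have key : (T oA <= 2) || (T oB <= 3).
    case hAB: (prec oA oB).
    + have hBA : prec oB oA = false.
        apply/negP => h; have := irr oA; by rewrite (tr oB oA oA hAB h).
      apply/orP; left.
      apply: (cons oA (T oA) (arrT oA) pA_sh 2 pAsh_path).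
        move=> k; case: (ord2 k) => -> //; by rewrite ?irr ?hBA.
      by apply: mkp_arrival.
    + apply/orP; right.
      apply: (cons oB (T oB) (arrT oB) pB_sh 3 pBsh_path).
        move=> k; case: (ord2 k) => -> //; by rewrite ?irr ?hAB.
      by apply: mkp_arrival.
  have [pA0 [pAm _]] := sol.1 oA.
  have [pB0 [pBm _]] := sol.1 oB.
  apply: (@nosol (pi oA) (pi oB) (T oA) (T oB)) => //.
  + exact: mv_of.
  + exact: mv_of.
  + by apply: sol.2.
  + exact: (arrT oA).1.
  + exact: (arrT oB).1.
  + by case/orP: key => h; apply/orP; [right|left]; rewrite h ?TA ?TB.
Qed.
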